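(* Let $C_n=((v_0,\dots,v_{n-1}),c)$ be an edge-colored oriented cycle of order $n$. Suppose there exist $i,j\in[n]$ with $i\neq j$ such that for every $s\in[n]$ at least one of the following holds (which one may depend on $s$): $c(e_{i+s-1})=c(e_{j+s-1})$ and $c(e_{i+s})=c(e_{j+s})$; or $c(e_{i+s-1})=\overline{c(e_{j+s})}$ and $c(e_{i+s})=\overline{c(e_{j+s-1})}$. Then one of the following holds: (1) the map $v_x\mapsto v_{x+j-i}$ ($x\in[n]$) is a color respecting automorphism of $C_n$; or (2) the map $v_x\mapsto v_{x+2}$ ($x\in[n]$) is a color respecting automorphism of $C_n$ and $c(e)_1=0$ for every edge $e$ of $C_n$.
   Context: All indices are taken modulo $n$. Let $v_0,\dots,v_{n-1}$ be distinct vertices, $e_i=\{v_i,v_{i+1}\}$, and $A$ a set of colors. An edge-colored oriented cycle is $C_n=((v_0,\dots,v_{n-1}),c)$ with $c:\{e_0,\dots,e_{n-1}\}\to\mathbb F_3\times A$; $c(e)_1\in\mathbb F_3$ is the orientation and $c(e)_2\in A$ the undirected color, and $\overline{c(e)}:=(-c(e)_1,c(e)_2)$. A bijection $\varphi$ of $\{v_0,\dots,v_{n-1}\}$ is a color respecting automorphism if for every $i$ there is $j$ with $\{\varphi(v_i),\varphi(v_{i+1})\}=\{v_j,v_{j+1}\}$ and the color of $e_i$ satisfies $c(e_i)=c(e_j)$ if $(\varphi(v_i),\varphi(v_{i+1}))=(v_j,v_{j+1})$, and $c(e_i)=\overline{c(e_j)}$ if $(\varphi(v_i),\varphi(v_{i+1}))=(v_{j+1},v_j)$.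 *)

(* Defs.v *)
From mathcomp Require Import all_boot all_order all_algebra.
Set Implicit Arguments. Unset Strict Implicit. Unset Printing Implicit Defensive.
Import GRing.Theory.
Local Open Scope ring_scope.

(* An edge-colored oriented cycle of order n (n >= 3): the vertices v_0..v_{n-1}
   are identified with their indices in 'Z_n (indices taken mod n), the edge
   e_i = {v_i, v_{i+1}} is identified with its index i : 'Z_n, and the coloring
   is c : 'Z_n -> 'F_3 * A  (orientation, undirected color). *)

Definition cbar (A : Type) (a : 'F_3 * A) : 'F_3 * A := (- a.1, a.2).

Definition color_respecting_aut (n : nat) (A : Type) (c : 'Z_n -> 'F_3 * A)
  (phi : 'Z_n -> 'Z_n) : Prop :=
  bijective phi /\
  forall i : 'Z_n, exists j : 'Z_n,
    [set phi i; phi (i + 1)] = [set j; j + 1] /\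
    ((phi i, phi (i + 1)) = (j, j + 1) -> c i = c j) /\
    ((phi i, phi (i + 1)) = (j + 1, j) -> c i = cbar (c j)).

(* Main.v *)
Require Import Defs.
From mathcomp Require Import all_boot all_order all_algebra.
From Stdlib Require Import Classical.
From mathcomp Require Import ring.
Import GRing.Theory.
Local Open Scope ring_scope.

Lemma F3_self_opp (x : 'F_3) : x = - x -> x = 0.
Proof.
move=> h.
have h2 : x *+ 2 = 0 by rewrite mulr2n {1}h addNr.
have e3 : (3%:R : 'F_3) = 0 by rewrite pchar_Fp_0.
have h3 : x *+ 3 = 0 by rewrite -mulr_natr e3 mulr0.
by move: h3; rewrite mulrS h2 addr0.
Qed.

Lemma trans_aut (n : nat) (A : Type) (c : 'Z_n -> 'F_3 * A) (t : 'Z_n) :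
  (forall x, c (x + t) = c x) -> color_respecting_aut c (fun x => x + t).
Proof.
move=> ht; split.
  by exists (fun x => x - t) => x; rewrite ?addrK ?subrK.
move=> k; exists (k + t); split; first by rewrite addrAC.
split; first by move=> _; rewrite ht.
rewrite addrAC => /(congr1 fst) /= h.
have : k + t + 1 - (k + t) == 0 by rewrite -h subrr.
by rewrite addrC addKr oner_eq0.
Qed.

Lemma Zn_nat (n : nat) (x : 'Z_n) : x = (val x)%:R.
Proof. by rewrite natr_Zp. Qed.

Theorem mainTheorem14 (A : Type) (n : nat) (hn : (3 <= n)%N)
  (c : 'Z_n -> 'F_3 * A) (i j : 'Z_n) (hij : i != j)
  (H : forall s : 'Z_n,
      (c (i + s - 1) = c (j + s - 1) /\ c (i + s) = c (j + s)) \/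
      (c (i + s - 1) = cbar (c (j + s)) /\ c (i + s) = cbar (c (j + s - 1)))) :
  color_respecting_aut c (fun x => x + (j - i)) \/
  (color_respecting_aut c (fun x => x + 2) /\ forall e : 'Z_n, (c e).1 = 0).
Proof.
set d := j - i.
have P : forall k, (c (k - 1) = c (k + d - 1) /\ c k = c (k + d)) \/
   (c (k - 1) = cbar (c (k + d)) /\ c k = cbar (c (k + d - 1))).
  move=> k; have := H (k - i).
  have -> : i + (k - i) = k by rewrite addrC subrK.
  by have -> : j + (k - i) = k + d by rewrite /d addrCA addrA.
have barK : forall a : 'F_3 * A, cbar (cbar a) = a.
  by case=> a b; rewrite /cbar /= opprK.
have [allA|] := classic (forall x, c (x + d) = c x).
  by left; apply: trans_aut.
move=> /not_all_ex_not [k0 hk0].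
have Hall : forall m : nat, c (k0 + m%:R + d) <> c (k0 + m%:R).
  elim=> [|m IH]; first by rewrite addr0.
  have := P (k0 + m%:R + 1); rewrite addrK.
  have e1 : k0 + m%:R + 1 + d - 1 = k0 + m%:R + d by rewrite addrAC addrK.
  rewrite e1 => -[[h _]|]; first by move: IH; rewrite h.
  move=> [h1 h2] h3.
  have e2 : k0 + m.+1%:R = k0 + m%:R + 1 by rewrite -natr1 addrA.
  rewrite e2 in h3.
  by apply: IH; rewrite h1 h3 h2 barK.
have Nall : forall x, c (x + d) <> c x.
  move=> x; have := Hall (val (x - k0)); rewrite -Zn_nat.
  by have -> : k0 + (x - k0) = x by rewrite addrC subrK.
have B : forall k, c (k - 1) = cbar (c (k + d)) /\ c k = cbar (c (k + d - 1)).
  by move=> k; case: (P k) => [[_ h]|//]; case: (Nall k).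
have per2 : forall x, c (x + 2) = c x.
  move=> x; have [_ h1] := B (x + 2); have [h2 _] := B (x + 1).
  have e1 : x + 2 + d - 1 = x + 1 + d by ring.
  have e2 : x + 1 - 1 = x by ring.
  by rewrite h1 e1 -h2 e2.
have shift : forall x, c (x + d + 1) = cbar (c x).
  move=> x; have [h _] := B (x + 1).
  have e2 : x + 1 - 1 = x by ring.
  by rewrite e2 in h; rewrite h barK; congr (c _); ring.
have per : forall k x, c (x + (k.*2)%:R) = c x.
  elim=> [|k IH] x; first by rewrite addr0.
  have -> : x + (k.+1.*2)%:R = (x + (k.*2)%:R) + 2.
    by rewrite doubleS -!natr1; ring.
  by rewrite per2 IH.
have dE : d = (val d)%:R := @Zn_nat n d.
have oddh := odd_double_half (val d).
case hodd : (odd (val d)) oddh => oddh.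
  right; split; first by apply: trans_aut.
  move=> e; apply: F3_self_opp.
  have oddh' := odd_double_half (val d).+1.
  rewrite /= hodd /= add0n in oddh'.
  have : c (e + d + 1) = c e.
    have -> : e + d + 1 = e + ((val d).+1)%:R by rewrite {1}dE -natr1 addrA.
    by rewrite -oddh' per.
  by rewrite shift => h; rewrite -{1}h.
exfalso; apply: (Nall k0).
by rewrite dE -oddh add0n per.
Qed.
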